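(* Let $b:\mathbb R^n\to\mathbb R^n$ be locally Lipschitz continuous and suppose there are $R\ge0$, $\kappa>0$ with $\langle b(x)-b(y),x-y\rangle\le-\kappa|x-y|^2$ for all $x,y\in\mathbb R^n\setminus B_R$. Then for any $\bar\kappa\in(0,\kappa)$ there is $\bar R>0$ such that $\langle b(x)-b(y),x-y\rangle\le-\bar\kappa|x-y|^2$ for all $y\in\mathbb R^n$ and all $|x|>\bar R$.
   Context: $B_R$ denotes the closed (or open) ball of radius $R$ about the origin in $\mathbb R^n$. *)

(* Defs.v *)
From HB Require Import structures.
From mathcomp Require Import all_boot all_order all_algebra.
From mathcomp Require Import reals.
Set Implicit Arguments. Unset Strict Implicit. Unset Printing Implicit Defensive.
Import Order.TTheory GRing.Theory Num.Theory.
Local Open Scope ring_scope.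

Definition dotv (R : realType) (n : nat) (x y : 'rV[R]_n) : R :=
  \sum_(i < n) x 0 i * y 0 i.

Definition enorm (R : realType) (n : nat) (x : 'rV[R]_n) : R :=
  Num.sqrt (dotv x x).

Definition locally_lipschitz (R : realType) (n : nat) (b : 'rV[R]_n -> 'rV[R]_n) : Prop :=
  forall x : 'rV[R]_n, exists r : R, exists L : R, 0 < r /\ 0 <= L /\
    forall y z : 'rV[R]_n, enorm (y - x) < r -> enorm (z - x) < r ->
      enorm (b y - b z) <= L * enorm (y - z).

(* Main.v *)
Require Import Defs.
From HB Require Import structures.
From mathcomp Require Import all_boot all_order all_algebra.
From mathcomp Require Import reals.
Import Order.TTheory GRing.Theory Num.Theory.
Local Open Scope ring_scope.
From mathcomp Require Import all_classical all_reals all_analysis.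
From mathcomp Require Import ring lra.
Import numFieldNormedType.Exports.
Local Open Scope classical_set_scope.
Local Open Scope ring_scope.
Local Set Implicit Arguments. Local Unset Strict Implicit.
Section DotV.
Variables (R : realType) (n : nat).
Implicit Types x y z : 'rV[R]_n.

Lemma dotvC x y : dotv x y = dotv y x.
Proof. by apply: eq_bigr => i _; rewrite mulrC. Qed.

Lemma dotvDl x y z : dotv (x + y) z = dotv x z + dotv y z.
Proof. by rewrite /dotv -big_split; apply: eq_bigr => i _; rewrite mxE mulrDl. Qed.

Lemma dotvZl (a : R) x y : dotv (a *: x) y = a * dotv x y.
Proof. by rewrite /dotv mulr_sumr; apply: eq_bigr => i _; rewrite mxE mulrA. Qed.

Lemma dotvNl x y : dotv (- x) y = - dotv x y.
Proof. by rewrite -scaleN1r dotvZl mulN1r. Qed.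

Lemma dotvBl x y z : dotv (x - y) z = dotv x z - dotv y z.
Proof. by rewrite dotvDl dotvNl. Qed.

Lemma dotvDr x y z : dotv z (x + y) = dotv z x + dotv z y.
Proof. by rewrite dotvC dotvDl !(dotvC z). Qed.

Lemma dotvZr (a : R) x y : dotv y (a *: x) = a * dotv y x.
Proof. by rewrite dotvC dotvZl dotvC. Qed.

Lemma dotvBr x y z : dotv z (x - y) = dotv z x - dotv z y.
Proof. by rewrite dotvC dotvBl !(dotvC z). Qed.

Lemma dotv_ge0 x : 0 <= dotv x x.
Proof. by apply: sumr_ge0 => i _; rewrite -expr2; apply: sqr_ge0. Qed.

Lemma dotv_eq0 x : dotv x x = 0 -> forall y, dotv y x = 0.
Proof.
move=> /eqP; rewrite psumr_eq0; last by move=> i _; rewrite -expr2; apply: sqr_ge0.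
move=> /allP H y; apply: big1 => i _.
have := H i (mem_index_enum i); rewrite mulf_eq0 orbb => /eqP ->.
by rewrite mulr0.
Qed.

Lemma enorm_ge0 x : 0 <= enorm x.
Proof. exact: sqrtr_ge0. Qed.

Lemma enorm_sqr x : enorm x ^+ 2 = dotv x x.
Proof. by rewrite sqr_sqrtr // dotv_ge0. Qed.

Lemma cauchy_schwarz x y : dotv x y <= enorm x * enorm y.
Proof.
have [y0|ynz] := eqVneq (dotv y y) 0.
  by rewrite (dotv_eq0 y0) mulr_ge0 // enorm_ge0.
have ypos : 0 < dotv y y by rewrite lt0r ynz dotv_ge0.
set t := dotv x y / dotv y y.
have H := dotv_ge0 (x - t *: y).
rewrite !(dotvBl, dotvBr, dotvZl, dotvZr) (dotvC y x) in H.
have H2 : dotv x y ^+ 2 <= (enorm x * enorm y) ^+ 2.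
  rewrite exprMn !enorm_sqr.
  have E : t * dotv x y = dotv x y ^+ 2 / dotv y y by rewrite /t; field.
  have E2 : t * (t * dotv y y) = dotv x y ^+ 2 / dotv y y by rewrite /t; field.
  have : dotv x y ^+ 2 / dotv y y <= dotv x x.
    move: H; rewrite mulrBr E E2; lra.
  by rewrite ler_pdivrMr // .
have := ler_norm (dotv x y); move: H2.
rewrite -[dotv x y ^+ 2]real_normK ?num_real // => H2.
have : `|dotv x y| <= enorm x * enorm y.
  by rewrite -(ler_pXn2r (n := 2)) // ?nnegrE ?mulr_ge0 ?enorm_ge0.
move=> h1 h2; exact: le_trans h2 h1.
Qed.

Lemma enorm_triangle x y : enorm (x + y) <= enorm x + enorm y.
Proof.
rewrite -(ler_pXn2r (n := 2)) // ?nnegrE ?addr_ge0 ?enorm_ge0 //.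
rewrite enorm_sqr !(dotvDl, dotvDr) (dotvC y x).
have := cauchy_schwarz x y.
rewrite -!enorm_sqr; nra.
Qed.

Lemma enormZ (a : R) x : enorm (a *: x) = `|a| * enorm x.
Proof.
by rewrite /enorm dotvZl dotvZr mulrA -expr2 sqrtrM ?sqr_ge0 // sqrtr_sqr.
Qed.

Lemma enormN x : enorm (- x) = enorm x.
Proof. by rewrite -scaleN1r enormZ normrN normr1 mul1r. Qed.

End DotV.
Section Bound.
Variables (R : realType) (n : nat).

Lemma mx_le_enorm (v : 'rV[R]_n) : `|v| <= enorm v.
Proof.
rewrite (_ : `|v| = mx_norm v) // mx_normrE; apply/bigmax_leP; split; first exact: enorm_ge0.
move=> [i j] _ /=; rewrite (ord1 i).
rewrite -sqrtr_sqr /enorm ler_wsqrtr // /dotv (bigD1 j) //= -expr2 lerDl.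
by apply: sumr_ge0 => k _; rewrite -expr2 sqr_ge0.
Qed.

Lemma enorm_le_mx (v : 'rV[R]_n) : enorm v <= (n%:R + 1) * `|v|.
Proof.
have vge0 : 0 <= `|v| by [].
rewrite -[X in _ <= X]ger0_norm ?mulr_ge0 ?addr_ge0 // -sqrtr_sqr /enorm.
apply: ler_wsqrtr.
have H : dotv v v <= n%:R * `|v| ^+ 2.
  have -> : n%:R * `|v| ^+ 2 = \sum_(i < n) `|v| ^+ 2 by rewrite sumr_const card_ord mulr_natl.
  apply: ler_sum => i _; rewrite -expr2 -real_normK ?num_real //.
  rewrite ler_pXn2r ?nnegrE //.
  rewrite (_ : `|v| = mx_norm v) // mx_normrE; apply/bigmax_geP; right; exists (ord0, i) => //.
have n0 : (0 : R) <= n%:R by [].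
nra.
Qed.

Lemma enorm_rev (a c : 'rV[R]_n) : `|enorm a - enorm c| <= enorm (a - c).
Proof.
rewrite ler_norml; apply/andP; split.
  have := enorm_triangle (c - a) a; rewrite subrK -opprB enormN; lra.
have := enorm_triangle (a - c) c; rewrite subrK; lra.
Qed.

Lemma enorm_b_cont (b : 'rV[R]_n -> 'rV[R]_n) :
  locally_lipschitz b -> continuous (fun y => enorm (b y) : R).
Proof.
move=> bL x; apply/(@cvgrPdist_le _ _ _ (nbhs x) (nbhs_filter x)) => e e0.
have [r [L [r0 [L0 HL]]]] := bL x.
set d := Num.min r (e / (L + 1)) / (n%:R + 1).
have n1 : (0 : R) < n%:R + 1 by rewrite ltr_wpDl.
have eL : 0 < e / (L + 1) by rewrite divr_gt0 // ltr_wpDl.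
have d0 : 0 < d by rewrite /d divr_gt0 // lt_min r0 eL.
near=> t.
have : ball x d t by near: t; apply: (@near_ball _ _ x d d0).
rewrite -ball_normE /ball_ /= => Bt.
have Et : enorm (t - x) < Num.min r (e / (L + 1)).
  apply: le_lt_trans (enorm_le_mx _) _.
  rewrite -opprB normrN -ltr_pdivlMl // mulrC; exact: Bt.
move: Et; rewrite lt_min => /andP[Etr Ete].
have Ex : enorm (x - x) < r by rewrite subrr /enorm /dotv big1 ?sqrtr0 // => i _; rewrite mxE mulr0.
have := HL t x Etr Ex.
move=> H; rewrite distrC; apply: le_trans (enorm_rev _ _) _.
apply: le_trans H _.
have : L * enorm (t - x) <= L * (e / (L + 1)) by rewrite ler_wpM2l // ltW.
have : L * (e / (L + 1)) <= e.
  rewrite mulrA ler_pdivrMr ?ltr_wpDl //; nra.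
lra.
Unshelve. all: by end_near.
Qed.

Lemma ball_bound (b : 'rV[R]_n -> 'rV[R]_n) :
  locally_lipschitz b -> forall r : R,
  exists M, 0 <= M /\ forall y, enorm y <= r -> enorm (b y) <= M.
Proof.
move=> bL r.
set rho := `|r| + 1.
set A := closed_ball_ Num.norm (0 : 'rV[R]_n) rho.
have Acl : closed A by apply: closed_closed_ball_.
have Abd : bounded_set A.
  exists rho; split; first by rewrite num_real.
  by move=> M HM y; rewrite /A /closed_ball_ /= sub0r normrN => Hy /=; lra.
have Aco : compact A by apply: bounded_closed_compact.
have fco := continuous_compact (@continuous_subspaceT _ _ A _ (enorm_b_cont bL)) Aco.
have [M0 [_ HM]] := compact_bounded fco.
exists (`|M0| + 1); split; first by rewrite addr_ge0.
move=> y Hy.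
have Ay : A y.
  rewrite /A /closed_ball_ /= sub0r normrN.
  have := mx_le_enorm y; have := ler_norm r; rewrite /rho; lra.
have := HM (`|M0| + 1) ltac:(have := ler_norm M0; lra) (enorm (b y)) (ex_intro2 _ _ y Ay erefl).
move=> /= H; apply: le_trans H; exact: ler_norm.
Qed.

End Bound.
Local Unset Implicit Arguments.
Theorem lemma2p9 (R : realType) (n : nat) (b : 'rV[R]_n -> 'rV[R]_n)
    (R0 kappa : R) :
  locally_lipschitz b ->
  0 <= R0 -> 0 < kappa ->
  (forall x y : 'rV[R]_n, R0 < enorm x -> R0 < enorm y ->
     dotv (b x - b y) (x - y) <= - kappa * enorm (x - y) ^+ 2) ->
  forall kbar : R, 0 < kbar -> kbar < kappa ->
  exists Rbar : R, 0 < Rbar /\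
    forall x y : 'rV[R]_n, Rbar < enorm x ->
      dotv (b x - b y) (x - y) <= - kbar * enorm (x - y) ^+ 2.
Proof.
move=> bL R0ge0 kpos Hmon kbar kbpos kblt.
have [M [M0 HM]] := ball_bound bL (3 * R0 + 1).
set eps := kappa - kbar.
have epos : 0 < eps by rewrite /eps; lra.
exists (R0 + 2 * M / eps + 1).
have Meps : 0 <= 2 * M / eps by rewrite divr_ge0 // ?mulr_ge0 // ltW.
split; first lra.
move=> x y Hx.
have [Hy|Hy] := ltrP R0 (enorm y).
  have := Hmon x y ltac:(lra) Hy.
  have := sqr_ge0 (enorm (x - y)); nra.
set v := x - y; set d := enorm v.
have yge0 := enorm_ge0 y.
have dge : enorm x - enorm y <= d.
  have := enorm_triangle v y; rewrite /v subrK /d; lra.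
have dpos : 0 < d by lra.
set t := (2 * R0 + 1) / d.
have tpos : 0 < t by rewrite /t divr_gt0 //; lra.
have td : t * d = 2 * R0 + 1 by rewrite /t mulrVK ?unitfE ?gt_eqF.
set w := y - t *: v.
have Htv : enorm (t *: v) = t * d by rewrite enormZ gtr0_norm.
have wlo : R0 < enorm w.
  have := enorm_triangle y (- w); rewrite enormN (_ : y - w = t *: v) ?Htv; first lra.
  by rewrite /w opprB addrC subrK.
have whi : enorm w <= 3 * R0 + 1.
  have := enorm_triangle y (- (t *: v)); rewrite enormN Htv -/w; lra.
have Hxw := Hmon x w ltac:(lra) wlo.
have xw : x - w = (1 + t) *: v.
  by rewrite /w /v scalerDl scale1r opprB addrCA addrC.
rewrite xw dotvZr enorm_sqr dotvZl dotvZr -enorm_sqr -/d in Hxw.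
have H1 : dotv (b x - b w) v <= - kappa * (1 + t) * d ^+ 2.
  have h : 0 < 1 + t by lra.
  rewrite -(ler_pM2l h); move: Hxw; rewrite -!mulrA; nra.
have H2 : dotv (b w - b y) v <= 2 * M * d.
  have := cauchy_schwarz (b w - b y) v.
  have := enorm_triangle (b w) (- b y); rewrite enormN.
  have := HM w whi; have := HM y ltac:(lra).
  have := enorm_ge0 (b w - b y). rewrite -/d; nra.
have -> : b x - b y = (b x - b w) + (b w - b y) by rewrite addrA subrK.
rewrite dotvDl -/v -/d.
have Md : 2 * M <= eps * d.
  have : 2 * M / eps <= d by lra.
  by rewrite ler_pdivrMr // [eps * d]mulrC.
have h3 : - kappa * (1 + t) * d ^+ 2 <= - kappa * d ^+ 2.
  have := sqr_ge0 d; have := mulr_ge0 (ltW kpos) (ltW tpos); nra.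
have h4 : 2 * M * d <= eps * d * d by rewrite ler_pM2r.
rewrite /eps expr2 in h3 h4 H1 *; lra.
Qed.
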